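(* For $i=1,2$ let $R_i$ be a unital ring whose additive group is finitely generated and torsion-free, and let $M_i\subseteq R_i^\times$ be a submonoid. Suppose there are $\mathbb Q$-algebra isomorphisms $\varphi_1\colon\mathbb QR_1\to\mathbb QR_2$ and $\varphi_2\colon\mathbb QR_2\to\mathbb QR_1$ with $\varphi_1(\langle M_1\rangle)\subseteq\langle M_2\rangle$ and $\varphi_2(\langle M_2\rangle)\subseteq\langle M_1\rangle$. If (S') every $\mathbb Q$-algebra automorphism $\psi$ of $\mathbb QR_1$ with $\psi(\langle M_1\rangle)\subseteq\langle M_1\rangle$ satisfies $\psi(\langle M_1\rangle)=\langle M_1\rangle$, then $\varphi_1(\langle M_1\rangle)=\langle M_2\rangle$ and $\varphi_2(\langle M_2\rangle)=\langle M_1\rangle$, so that the actions $\langle M_1\rangle\curvearrowright\mathbb QR_1$ and $\langle M_2\rangle\curvearrowright\mathbb QR_2$ by left multiplication are isomorphic. If (N) $M_i=\langle M_i\rangle\cap\mathcal O_i$ for $i=1,2$, and (S) every $\mathbb Q$-algebra automorphism $\psi$ of $\mathbb QR_1$ with $\psi(M_1)\subseteq M_1$ satisfies $\psi(M_1)=M_1$, then $\varphi_1(M_1)=M_2$ and $\varphi_2(M_2)=M_1$; consequently the actions $M_1\curvearrowright{\rm span}_{\mathbb Z}(M_1)$ and $M_2\curvearrowright{\rm span}_{\mathbb Z}(M_2)$ by left multiplication are isomorphic, and if each $\mathcal O_i$ is closed under addition and invariant under left multiplication by $M_i$, then $M_1\curvearrowright\mathcal O_1$ and $M_2\curvearrowright\mathcal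 O_2$ are isomorphic.
   Context: $\mathbb QR=\mathbb Q\otimes_{\mathbb Z}R$. $R^\times$ is the monoid of left regular elements of $R$; $\langle M\rangle$ is the subgroup of $(\mathbb QR)^*$ generated by $M$. $\mathcal O_i$ is the set of elements of $\mathbb QR_i$ integral over $\mathbb Z$. Two actions $\sigma\colon S\curvearrowright A$, $\tau\colon T\curvearrowright B$ of monoids on abelian groups are isomorphic if there are a monoid isomorphism $\mathfrak t\colon S\to T$ and a group isomorphism $\mathfrak b\colon A\to B$ with $\mathfrak b(\sigma_s(x))=\tau_{\mathfrak t(s)}(\mathfrak b(x))$. *)

(* Defs.v *)
From HB Require Import structures.
From mathcomp Require Import all_boot all_order all_algebra.
Set Implicit Arguments. Unset Strict Implicit. Unset Printing Implicit Defensive.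
Import Order.TTheory GRing.Theory Num.Theory.
Local Open Scope ring_scope.

Definition fg_torsion_free (R : nzRingType) : Prop :=
  (exists gens : seq R, forall r : R, exists c : 'I_(size gens) -> int,
      r = \sum_(i < size gens) gens`_i *~ c i)
  /\ (forall (r : R) (n : nat), r *+ n.+1 = 0 -> r = 0).

(* (A, iota) is a model of QR = Q (x)_Z R : iota is an injective ring
   morphism R -> A into a Q-algebra and every element of A has the form
   (1/n) iota(r); equivalently the Q-linear extension Q (x) R -> A,
   q (x) r |-> q *: iota r, is an isomorphism of Q-algebras. *)
Definition is_QR (R : nzRingType) (A : algType rat) (iota : {rmorphism R -> A})
  : Prop :=
  injective iota /\ (forall a : A, exists (n : nat) (r : R), a *+ n.+1 = iota r).

(* M is a submonoid of the monoid R^x of left regular elements of R. *)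
Definition lreg_submonoid (R : nzRingType) (M : R -> Prop) : Prop :=
  [/\ M 1, (forall x y, M x -> M y -> M (x * y)) & (forall x, M x -> GRing.lreg x)].

Definition img (A B : Type) (f : A -> B) (X : A -> Prop) : B -> Prop :=
  fun y => exists2 x, X x & f x = y.

Definition subset_of (A : Type) (X Y : A -> Prop) : Prop := forall x, X x -> Y x.
Definition set_equal (A : Type) (X Y : A -> Prop) : Prop := forall x, X x <-> Y x.

Inductive gen_group (A : nzRingType) (X : A -> Prop) : A -> Prop :=
  | gen_group_in x : X x -> gen_group X x
  | gen_group_1 : gen_group X 1
  | gen_group_mul x y : gen_group X x -> gen_group X y -> gen_group X (x * y)
  | gen_group_inv x y : gen_group X x -> x * y = 1 -> y * x = 1 -> gen_group X y.

Definition grp_of (R : nzRingType) (A : algType rat) (iota : {rmorphism R -> A})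
  (M : R -> Prop) : A -> Prop := gen_group (img iota M).

Definition integral_over_Z (A : nzRingType) (a : A) : Prop :=
  exists (n : nat) (c : 'I_n -> int),
    a ^+ n + \sum_(i < n) (a ^+ i) *~ c i = 0.

Definition Qalg_iso (A B : algType rat) (f : A -> B) : Prop :=
  [/\ {morph f : x y / x + y}, {morph f : x y / x * y}, f 1 = 1,
      (forall (q : rat) (x : A), f (q *: x) = q *: f x) & bijective f].

Definition zspan (A : nzRingType) (X : A -> Prop) : A -> Prop :=
  fun x => exists (n : nat) (m : 'I_n -> A) (c : 'I_n -> int),
    (forall i, X (m i)) /\ x = \sum_(i < n) m i *~ c i.

Definition lmul_action_iso (A1 A2 : nzRingType)
  (S1 X1 : A1 -> Prop) (S2 X2 : A2 -> Prop) : Prop :=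
  exists (t : A1 -> A2) (b : A1 -> A2),
    ((forall s, S1 s -> S2 (t s)) /\
     (forall s', S2 s' -> exists s, S1 s /\ t s = s') /\
     (forall s1 s2, S1 s1 -> S1 s2 -> t s1 = t s2 -> s1 = s2) /\
     (forall s1 s2, S1 s1 -> S1 s2 -> t (s1 * s2) = t s1 * t s2) /\
     t 1 = 1) /\
    ((forall x, X1 x -> X2 (b x)) /\
     (forall y, X2 y -> exists x, X1 x /\ b x = y) /\
     (forall x1 x2, X1 x1 -> X1 x2 -> b x1 = b x2 -> x1 = x2) /\
     (forall x1 x2, X1 x1 -> X1 x2 -> b (x1 + x2) = b x1 + b x2)) /\
    (forall s x, S1 s -> X1 x -> b (s * x) = t s * b x).

(* Main.v *)
Require Import Defs.
From HB Require Import structures.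
From mathcomp Require Import all_boot all_order all_algebra.
Local Open Scope ring_scope.

Module Helpers.
Set Implicit Arguments.
Import GRing.Theory.

Lemma iso0 (A B : algType rat) (f : A -> B) : Qalg_iso f -> f 0 = 0.
Proof.
case=> fD _ _ _ _; apply: (addrI (f 0)); by rewrite -fD !addr0.
Qed.

Lemma isoN (A B : algType rat) (f : A -> B) : Qalg_iso f -> forall x, f (- x) = - f x.
Proof.
move=> h x; have f0 := iso0 h; case: h => fD _ _ _ _.
apply: (addrI (f x)); by rewrite -fD !subrr.
Qed.

Lemma isoMn (A B : algType rat) (f : A -> B) : Qalg_iso f ->
  forall x n, f (x *+ n) = f x *+ n.
Proof.
move=> h x; elim=> [|n IH]; first by rewrite !mulr0n (iso0 h).
by case: h => fD _ _ _ _; rewrite !mulrS fD IH.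
Qed.

Lemma isoMz (A B : algType rat) (f : A -> B) : Qalg_iso f ->
  forall x (z : int), f (x *~ z) = f x *~ z.
Proof.
move=> h x [n|n]; first by rewrite /= isoMn.
by rewrite !NegzE !mulrNz isoN // -!pmulrn isoMn.
Qed.

Lemma isosum (A B : algType rat) (f : A -> B) : Qalg_iso f ->
  forall n (F : 'I_n -> A), f (\sum_(i < n) F i) = \sum_(i < n) f (F i).
Proof.
move=> h n F; apply: (big_morph f); last exact: iso0.
by case: h.
Qed.

Lemma isoX (A B : algType rat) (f : A -> B) : Qalg_iso f ->
  forall x n, f (x ^+ n) = f x ^+ n.
Proof.
case=> _ fM f1 _ _ x; elim=> [|n IH]; first by rewrite !expr0.
by rewrite !exprS fM IH.
Qed.

Lemma iso_integral (A B : algType rat) (f : A -> B) : Qalg_iso f ->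
  forall a, integral_over_Z a -> integral_over_Z (f a).
Proof.
move=> h a [n [c E]]; exists n, c.
have := congr1 f E; rewrite iso0 //; case: (h) => fD _ _ _ _.
rewrite fD isosum // isoX //.
by under eq_bigr => i _ do rewrite isoMz // isoX //.
Qed.

Lemma iso_inv (A B : algType rat) (f : A -> B) : Qalg_iso f ->
  exists g : B -> A, [/\ Qalg_iso g, cancel f g & cancel g f].
Proof.
move=> h; case: (h) => fD fM f1 fZ [g fK gK]; exists g; split => //.
split.
- by move=> x y; rewrite -{1}(gK x) -{1}(gK y) -fD fK.
- by move=> x y; rewrite -{1}(gK x) -{1}(gK y) -fM fK.
- by rewrite -f1 fK.
- by move=> q x; rewrite -{1}(gK x) -fZ fK.
- by exists f.
Qed.

Lemma iso_comp (A B C : algType rat) (f : A -> B) (g : B -> C) :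
  Qalg_iso f -> Qalg_iso g -> Qalg_iso (g \o f).
Proof.
case=> fD fM f1 fZ fb [gD gM g1 gZ gb]; split.
- by move=> x y /=; rewrite fD gD.
- by move=> x y /=; rewrite fM gM.
- by rewrite /= f1 g1.
- by move=> q x /=; rewrite fZ gZ.
- exact: bij_comp.
Qed.

Lemma iso_inj (A B : algType rat) (f : A -> B) : Qalg_iso f -> injective f.
Proof. by case=> _ _ _ _ /bij_inj. Qed.

Lemma set_lemma (T1 T2 : Type) (f1 : T1 -> T2) (f2 : T2 -> T1) X Y :
  injective f2 -> subset_of (img f1 X) Y -> subset_of (img f2 Y) X ->
  set_equal (img (f2 \o f1) X) X ->
  set_equal (img f1 X) Y /\ set_equal (img f2 Y) X.
Proof.
move=> inj s1 s2 e; split => z; split.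
- exact: s1.
- move=> Yz; have : X (f2 z) by apply: s2; exists z.
  case/e => x Xx /= /inj <-; by exists x.
- exact: s2.
- case/e => x Xx /= <-; exists (f1 x) => //; apply: s1; by exists x.
Qed.

Lemma comp_sub (T1 T2 : Type) (f1 : T1 -> T2) (f2 : T2 -> T1) X Y :
  subset_of (img f1 X) Y -> subset_of (img f2 Y) X ->
  subset_of (img (f2 \o f1) X) X.
Proof.
move=> s1 s2 z [x Xx <-]; apply: s2; exists (f1 x) => //; apply: s1; by exists x.
Qed.

Lemma action_lemma (A B : algType rat) (f : A -> B) S1 X1 S2 X2 :
  Qalg_iso f -> set_equal (img f S1) S2 -> set_equal (img f X1) X2 ->
  lmul_action_iso S1 X1 S2 X2.
Proof.
move=> h eS eX; have inj := iso_inj h; case: h => fD fM f1 _ _.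
exists f, f; split; [|split].
- split; first by move=> s Ss; apply/eS; exists s.
  split; first by move=> s' /eS [s Ss <-]; exists s.
  split; first by move=> s1 s2 _ _ /inj.
  by split.
- split; first by move=> s Ss; apply/eX; exists s.
  split; first by move=> s' /eX [s Ss <-]; exists s.
  split; first by move=> s1 s2 _ _ /inj.
  by [].
- by move=> s x _ _; rewrite fM.
Qed.

Lemma zspan_lemma (A B : algType rat) (f : A -> B) S1 S2 :
  Qalg_iso f -> set_equal (img f S1) S2 ->
  set_equal (img f (zspan S1)) (zspan S2).
Proof.
move=> h e y; split.
- case=> x [n [m [c [Sm ->]]]] <-; exists n, (f \o m), c; split.
    by move=> i; apply/e; exists (m i).
  by rewrite isosum //; apply: eq_bigr => i _; rewrite isoMz.
- case=> n [m [c [Sm ->]]].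
  have [g [_ fK gK]] := iso_inv h.
  exists (\sum_(i < n) g (m i) *~ c i).
    exists n, (g \o m), c; split => // i /=.
    by case/e: (Sm i) => x Sx <-; rewrite fK.
  by rewrite isosum //; apply: eq_bigr => i _; rewrite isoMz // gK.
Qed.

End Helpers.
Import Helpers.

Theorem corollary5p2
  (R1 R2 : nzRingType) (A1 A2 : algType rat)
  (iota1 : {rmorphism R1 -> A1}) (iota2 : {rmorphism R2 -> A2})
  (M1 : R1 -> Prop) (M2 : R2 -> Prop)
  (phi1 : A1 -> A2) (phi2 : A2 -> A1)
  (hR1 : fg_torsion_free R1) (hR2 : fg_torsion_free R2)
  (hA1 : is_QR iota1) (hA2 : is_QR iota2)
  (hM1 : lreg_submonoid M1) (hM2 : lreg_submonoid M2)
  (hphi1 : Qalg_iso phi1) (hphi2 : Qalg_iso phi2)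
  (hsub1 : subset_of (img phi1 (grp_of iota1 M1)) (grp_of iota2 M2))
  (hsub2 : subset_of (img phi2 (grp_of iota2 M2)) (grp_of iota1 M1)) :
  (* first assertion, under (S') *)
  ((forall psi : A1 -> A1, Qalg_iso psi ->
       subset_of (img psi (grp_of iota1 M1)) (grp_of iota1 M1) ->
       set_equal (img psi (grp_of iota1 M1)) (grp_of iota1 M1)) ->
   [/\ set_equal (img phi1 (grp_of iota1 M1)) (grp_of iota2 M2),
       set_equal (img phi2 (grp_of iota2 M2)) (grp_of iota1 M1) &
       lmul_action_iso (grp_of iota1 M1) (fun _ => True)
                       (grp_of iota2 M2) (fun _ => True)])
  /\
  (* second assertion, under (N) and (S) *)
  (set_equal (img iota1 M1) (fun x => grp_of iota1 M1 x /\ integral_over_Z x) ->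
   set_equal (img iota2 M2) (fun x => grp_of iota2 M2 x /\ integral_over_Z x) ->
   (forall psi : A1 -> A1, Qalg_iso psi ->
       subset_of (img psi (img iota1 M1)) (img iota1 M1) ->
       set_equal (img psi (img iota1 M1)) (img iota1 M1)) ->
   [/\ set_equal (img phi1 (img iota1 M1)) (img iota2 M2),
       set_equal (img phi2 (img iota2 M2)) (img iota1 M1),
       lmul_action_iso (img iota1 M1) (zspan (img iota1 M1))
                       (img iota2 M2) (zspan (img iota2 M2)) &
       ((forall a b : A1, integral_over_Z a -> integral_over_Z b ->
            integral_over_Z (a + b)) ->
        (forall (m : R1) (a : A1), M1 m -> integral_over_Z a ->
            integral_over_Z (iota1 m * a)) ->
        (forall a b : A2, integral_over_Z a -> integral_over_Z b ->
            integral_over_Z (a + b)) ->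
        (forall (m : R2) (a : A2), M2 m -> integral_over_Z a ->
            integral_over_Z (iota2 m * a)) ->
        lmul_action_iso (img iota1 M1) (@integral_over_Z A1)
                        (img iota2 M2) (@integral_over_Z A2))]).
Proof.
have inj2 := iso_inj hphi2.
have hcomp := iso_comp hphi1 hphi2.
split.
- move=> S'.
  have [e1 e2] := set_lemma inj2 hsub1 hsub2 (S' _ hcomp (comp_sub hsub1 hsub2)).
  split => //; apply: (action_lemma hphi1 e1).
  move=> y; split => // _; case: (hphi1) => _ _ _ _ [g _ gK].
  by exists (g y).
- move=> N1 N2 S.
  have s1 : subset_of (img phi1 (img iota1 M1)) (img iota2 M2).
    move=> y [x Mx <-]; apply/N2; have /N1 [Gx Ix] := Mx; split.
      by apply: hsub1; exists x.
    exact: iso_integral.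
  have s2 : subset_of (img phi2 (img iota2 M2)) (img iota1 M1).
    move=> y [x Mx <-]; apply/N1; have /N2 [Gx Ix] := Mx; split.
      by apply: hsub2; exists x.
    exact: iso_integral.
  have [e1 e2] := set_lemma inj2 s1 s2 (S _ hcomp (comp_sub s1 s2)).
  split => //; first exact: (action_lemma hphi1 e1 (zspan_lemma hphi1 e1)).
  move=> _ _ _ _; apply: (action_lemma hphi1 e1) => y; split.
    by case=> x Ix <-; apply: iso_integral.
  have [g [hg _ gK]] := iso_inv hphi1.
  by move=> Iy; exists (g y) => //; apply: iso_integral.
Qed.
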